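(* Let $D$ be a digraph with $n$ vertices that contains a directed cycle, and let $g$ be its girth. Then $\chi(D)\leq \left\lfloor\frac{n-1}{g-1}\right\rfloor+1$.
   Context: All digraphs are finite, loopless and strict (at most one edge from $u$ to $v$ for distinct $u,v$). The girth is the length of a shortest directed cycle. A subset $S\subseteq V(D)$ is acyclic if $D[S]$ contains no directed cycle; a proper $k$-coloring of $D$ is a partition of $V(D)$ into at most $k$ acyclic subsets, and $\chi(D)$ is the minimum $k$ for which $D$ has a proper $k$-coloring. *)

(* Defs.v *)
From mathcomp Require Import all_boot.
Set Implicit Arguments. Unset Strict Implicit. Unset Printing Implicit Defensive.

(* A digraph on the finite vertex type T is given by an edge relation e : rel T
   (strictness is automatic); it is loopless when ~~ e x x for all x. *)
Definition loopless (T : finType) (e : rel T) : Prop := forall x : T, ~~ e x x.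

(* A directed cycle is a nonempty duplicate-free sequence [:: v0; ...; v_{k-1}]
   with edges v0->v1, ..., v_{k-2}->v_{k-1}, v_{k-1}->v0; its length is k. *)
Definition dicycle (T : finType) (e : rel T) (c : seq T) : Prop :=
  [/\ c != [::], uniq c & cycle e c].

Definition is_girth (T : finType) (e : rel T) (g : nat) : Prop :=
  (exists c, dicycle e c /\ size c = g) /\
  (forall c, dicycle e c -> g <= size c).

Definition acyclic_set (T : finType) (e : rel T) (S : {set T}) : Prop :=
  forall c : seq T, dicycle e c -> ~ {subset c <= S}.

(* D has a proper k-coloring: a partition of V(D) into at most k acyclic sets,
   encoded as a map to 'I_k whose colour classes are acyclic (empty classes allowed). *)
Definition dicolorable (T : finType) (e : rel T) (k : nat) : Prop :=
  exists f : T -> 'I_k, forall i : 'I_k, acyclic_set e [set x | f x == i].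

(* Main.v *)
Require Import Defs.
From mathcomp Require Import all_boot.
From mathcomp Require Import zify.

Lemma rank_bound (T : finType) (m : nat) (x : T) :
  (enum_rank x) %/ m < (#|T| - 1) %/ m + 1.
Proof.
rewrite addn1 ltnS; apply: leq_div2r.
have h : (enum_rank x < #|T|)%N := ltn_ord _.
lia.
Qed.

Theorem mainTheorem7 (T : finType) (e : rel T) (g : nat) :
  loopless e ->
  (exists c : seq T, dicycle e c) ->
  is_girth e g ->
  dicolorable e ((#|T| - 1) %/ (g - 1) + 1).
Proof.
move=> Hl _ [[c0 [[c0n0 _ c0c] Hc0]] Hg].
have gpos : 0 < g - 1.
  rewrite -Hc0; case: c0 c0n0 c0c {Hc0} => [|a [|b l]] //= _.
  by rewrite andbT (negbTE (Hl a)).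
exists (fun x => Ordinal (@rank_bound T (g - 1) x)) => i c Hc Hsub.
have Hgc := Hg c Hc.
case: Hc => cn0 cu _.
set s := map (fun x => nat_of_ord (enum_rank x)) c.
have su : uniq s by rewrite map_inj_uniq //; move=> a b /val_inj /enum_rank_inj.
have sub : {subset s <= iota (i * (g - 1)) (g - 1)}.
  move=> r /mapP [x /Hsub xin ->]; rewrite inE in xin.
  move/eqP: xin => <- /=; rewrite mem_iota.
  rewrite leq_divM /= -mulSnr.
  exact: ltn_ceil.
have := uniq_leq_size su sub.
rewrite size_iota /s size_map => h.
lia.
Qed.
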